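(* Let $n\geq3$, let $S_n=K_{1,n-1}$ be the star with centre $v$, and let $c_0$ be a finite chip configuration on $S_n$ with resulting configurations $(c_t)_{t\ge0}$. Let $\ell_M$ be a leaf whose value $c_0(\ell_M)$ is maximum among leaves and $\ell_m$ a leaf whose value $c_0(\ell_m)$ is minimum among leaves, and let $d_t=\max_{x,y\in V(S_n)\setminus\{v\}}|c_t(x)-c_t(y)|$. Then: 1. For all $t\geq0$, $d_t=c_t(\ell_M)-c_t(\ell_m)$. 2. If $c_t(\ell_m)\leq c_t(v)\leq c_t(\ell_M)$ and at least one of these inequalities is strict, then $d_{t+1}<d_t$. 3. If $c_t(v)<c_t(\ell_m)$, then there exists $r\geq t$ such that $c_r(v)\geq c_r(\ell_m)$. 4. If $c_t(v)<c_t(\ell_m)$ and $c_{t+1}(v)>c_{t+1}(\ell_M)$, then $c_t$ has property plus. 5. If $d_t=0$, then there exists $r\geq t$ such that $c_r$ has property plus.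
   Context: Diffusion process: for a vertex $u$, $\Delta_t^-(u)=|\{w\in N(u): c_t(u)>c_t(w)\}|$, $\Delta_t^+(u)=|\{w\in N(u): c_t(u)<c_t(w)\}|$, $\Delta_t(u)=\Delta_t^+(u)-\Delta_t^-(u)$, and $c_{t+1}(u)=c_t(u)+\Delta_t(u)$ for all $u$ simultaneously. A configuration $c_i$ has property plus if (1) $c_i(x)+\Delta_i(x)>c_i(y)+\Delta_i(y)$ for every edge $xy$ with $c_i(x)<c_i(y)$, and (2) $c_i(x)+\Delta_i(x)=c_i(y)+\Delta_i(y)$ for every edge $xy$ with $c_i(x)=c_i(y)$. *)

(* Defs.v *)
From mathcomp Require Import all_boot all_order all_algebra.
Set Implicit Arguments. Unset Strict Implicit. Unset Printing Implicit Defensive.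
Import Order.TTheory GRing.Theory Num.Theory.
Local Open Scope ring_scope.

(* A graph is a relation e on a finite vertex type (symmetric, irreflexive for
   the graphs considered).  A chip configuration is a map V -> int. *)
Section Diffusion.
Variable T : finType.
Variable e : rel T.

Definition dminus (c : T -> int) (u : T) : nat := #|[pred w | e u w && (c w < c u)]|.
Definition dplus (c : T -> int) (u : T) : nat := #|[pred w | e u w && (c u < c w)]|.
Definition Delta (c : T -> int) (u : T) : int := (dplus c u)%:Z - (dminus c u)%:Z.

Definition step (c : T -> int) : T -> int := fun u => c u + Delta c u.

Definition conf (c0 : T -> int) (t : nat) : T -> int := iter t step c0.

Definition prop_plus (c : T -> int) : Prop :=
  (forall x y, e x y -> c x < c y -> c x + Delta c x > c y + Delta c y) /\
  (forall x y, e x y -> c x = c y -> c x + Delta c x = c y + Delta c y).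
End Diffusion.

Definition star_edge (n : nat) (v : 'I_n) : rel 'I_n :=
  fun x y => (x != y) && ((x == v) || (y == v)).

Definition leaf_diam (n : nat) (v : 'I_n) (c : 'I_n -> int) : nat :=
  \max_(x | x != v) \max_(y | y != v) `|c x - c y|%N.

(* Main.v *)
Require Import Defs.
From mathcomp Require Import all_boot all_order all_algebra zify.
Import Order.TTheory GRing.Theory Num.Theory.
Local Open Scope ring_scope.

Lemma card_leaf n (v x : 'I_n) (P : pred 'I_n) : x != v ->
  #|[pred w | star_edge v x w && P w]| = P v.
Proof.
move=> xv.
rewrite (eq_card (B := [pred w | (w == v) && P w])); last first.
  move=> w; rewrite !inE /star_edge /=.
  case: (eqVneq w v) => [->|wv] /=; first by rewrite xv orbT.
  by rewrite (negbTE xv) orbF andbF.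
case Pv: (P v).
  rewrite (eq_card (B := pred1 v)) ?card1 // => w; rewrite !inE.
  by case: (eqVneq w v) => [->|].
rewrite eq_card0 // => w; rewrite !inE.
by case: (eqVneq w v) => [->|]; rewrite ?Pv.
Qed.

Lemma Delta_leaf n (v x : 'I_n) (c : 'I_n -> int) : x != v ->
  Delta (star_edge v) c x = (if c x < c v then 1 else if c v < c x then -1 else 0).
Proof.
move=> xv; rewrite /Delta /dplus /dminus !card_leaf //.
by case: ltgtP.
Qed.

Lemma dminus_v0 n (v : 'I_n) (c : 'I_n -> int) :
  (forall x, x != v -> ~~ (c x < c v)) -> dminus (star_edge v) c v = 0%N.
Proof.
move=> H; rewrite /dminus eq_card0 // => w; rewrite !inE /star_edge eqxx /=.
case: (eqVneq v w) => [<-|wv] //=.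
by apply/negbTE/H; rewrite eq_sym.
Qed.

Lemma dplus_v0 n (v : 'I_n) (c : 'I_n -> int) :
  (forall x, x != v -> ~~ (c v < c x)) -> dplus (star_edge v) c v = 0%N.
Proof.
move=> H; rewrite /dplus eq_card0 // => w; rewrite !inE /star_edge eqxx /=.
case: (eqVneq v w) => [<-|wv] //=.
by apply/negbTE/H; rewrite eq_sym.
Qed.

Lemma step_leaf n (v x : 'I_n) (c : 'I_n -> int) : x != v ->
  step (star_edge v) c x = c x + (if c x < c v then 1 else if c v < c x then -1 else 0).
Proof. by move=> xv; rewrite /step Delta_leaf. Qed.

Lemma mono_leaf n (v x y : 'I_n) (c : 'I_n -> int) : x != v -> y != v ->
  c x <= c y -> step (star_edge v) c x <= step (star_edge v) c y.
Proof.
move=> xv yv le; rewrite !step_leaf //.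
case: ltgtP => h1; case: ltgtP => h2; lia.
Qed.

Lemma step_v_ge n (v : 'I_n) (c : 'I_n -> int) :
  (forall x, x != v -> c v < c x) -> c v <= step (star_edge v) c v.
Proof.
move=> H; rewrite /step /Delta dminus_v0; last first.
  by move=> x xv; rewrite -leNgt ltW // H.
lia.
Qed.

Lemma step_v_le n (v : 'I_n) (c : 'I_n -> int) :
  (forall x, x != v -> c x < c v) -> step (star_edge v) c v <= c v.
Proof.
move=> H; rewrite /step /Delta dplus_v0; last first.
  by move=> x xv; rewrite -leNgt ltW // H.
lia.
Qed.

Lemma step_v_eq n (v : 'I_n) (c : 'I_n -> int) :
  (forall x, x != v -> c x = c v) -> step (star_edge v) c v = c v.
Proof.
move=> H; rewrite /step /Delta dplus_v0 ?dminus_v0; first lia.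
  by move=> x xv; rewrite H // ltxx.
by move=> x xv; rewrite H // ltxx.
Qed.

Lemma pp_star n (v : 'I_n) (c : 'I_n -> int) :
  (forall x, x != v ->
     (c v < c x /\ step (star_edge v) c x < step (star_edge v) c v) \/
     (c x < c v /\ step (star_edge v) c v < step (star_edge v) c x) \/
     (c x = c v /\ step (star_edge v) c x = step (star_edge v) c v)) ->
  prop_plus (star_edge v) c.
Proof.
rewrite /step => H; split.
- move=> x y /andP [xy /orP [/eqP xv | /eqP yv]] lt.
  + subst x. have yv : y != v by rewrite eq_sym.
    case: (H y yv) => [[h1 h2]|[[h1 h2]|[h1 h2]]]; lia.
  + subst y. case: (H x xy) => [[h1 h2]|[[h1 h2]|[h1 h2]]]; lia.
- move=> x y /andP [xy /orP [/eqP xv | /eqP yv]] eq.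
  + subst x. have yv : y != v by rewrite eq_sym.
    case: (H y yv) => [[h1 h2]|[[h1 h2]|[h1 h2]]]; lia.
  + subst y. case: (H x xy) => [[h1 h2]|[[h1 h2]|[h1 h2]]]; lia.
Qed.

Theorem lemma18 (n : nat) (hn : (3 <= n)%N) (v : 'I_n) (c0 : 'I_n -> int)
    (lM lm : 'I_n)
    (hlM : lM != v) (hMmax : forall x, x != v -> c0 x <= c0 lM)
    (hlm : lm != v) (hmmin : forall x, x != v -> c0 lm <= c0 x) :
  let c := conf (star_edge v) c0 in
  let d := fun t => leaf_diam v (c t) in
  (* 1 *) (forall t : nat, (d t)%:Z = c t lM - c t lm) /\
  (* 2 *) (forall t : nat, c t lm <= c t v -> c t v <= c t lM ->
             (c t lm < c t v \/ c t v < c t lM) -> (d t.+1 < d t)%N) /\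
  (* 3 *) (forall t : nat, c t v < c t lm ->
             exists r : nat, (t <= r)%N /\ c r lm <= c r v) /\
  (* 4 *) (forall t : nat, c t v < c t lm -> c t.+1 lM < c t.+1 v ->
             prop_plus (star_edge v) (c t)) /\
  (* 5 *) (forall t : nat, d t = 0%N ->
             exists r : nat, (t <= r)%N /\ prop_plus (star_edge v) (c r)).
Proof.
move=> c d.
have cS : forall t, c t.+1 = step (star_edge v) (c t) by [].
have inv : forall t x, x != v -> c t lm <= c t x /\ c t x <= c t lM.
  elim=> [|t IH] x xv; first by split; [apply: hmmin|apply: hMmax].
  rewrite !cS; case: (IH x xv) => h1 h2; split; exact: mono_leaf.
have P1 : forall t, (d t)%:Z = c t lM - c t lm.
  move=> t; have [h1 h2] := inv t lM hlM.
  have -> : d t = `|c t lM - c t lm|%N.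
    apply/eqP; rewrite eqn_leq; apply/andP; split.
    - apply/bigmax_leqP => x xv; apply/bigmax_leqP => y yv.
      have := inv t x xv; have := inv t y yv; lia.
    - rewrite /d /leaf_diam; apply: (bigop.bigmax_sup lM) => //; exact: (bigop.bigmax_sup lm).
  lia.
have eqcase : forall t, (forall x, x != v -> c t x = c t v) ->
    prop_plus (star_edge v) (c t).
  move=> t eqv; apply: pp_star => x xv; right; right.
  split; first exact: eqv.
  rewrite step_v_eq // step_leaf // eqv // ltxx; lia.
split; first exact: P1.
split.
  move=> t h1 h2 h3; rewrite -ltz_nat !P1 !cS !step_leaf //.
  case: (ltgtP (c t lM) (c t v)) => ?; case: (ltgtP (c t lm) (c t v)) => ?; lia.
have P3k : forall k t, c t lm - c t v <= k%:Z ->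
    exists r, (t <= r)%N /\ c r lm <= c r v.
  elim=> [|k IH] t hk.
    by exists t; split => //; lia.
  case: (leP (c t lm) (c t v)) => h; first by exists t.
  have allgt : forall x, x != v -> c t v < c t x.
    by move=> x xv; have := inv t x xv; lia.
  have hv := @step_v_ge _ v (c t) allgt.
  have hl : step (star_edge v) (c t) lm = c t lm - 1.
    by rewrite step_leaf // ltNge (ltW h) /= h.
  have [r [hr1 hr2]] := IH t.+1 ltac:(rewrite !cS; lia).
  by exists r; split => //; exact: ltnW.
split.
  by move=> t h; apply: (P3k `|c t lm - c t v|%N); lia.
split.
  move=> t h1 h2; apply: pp_star => x xv; left.
  have := inv t x xv; have := inv t.+1 x xv; rewrite !cS in h2 *; lia.
have P5k : forall k t, (forall x, x != v -> c t x = c t lm) ->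
    (`|c t lm - c t v| <= k)%N ->
    exists r, (t <= r)%N /\ prop_plus (star_edge v) (c r).
  elim=> [|k IH] t heq hk.
    exists t; split => //; apply: eqcase => x xv; rewrite heq //; lia.
  case: (ltgtP (c t v) (c t lm)) => h.
  - have allgt : forall x, x != v -> c t v < c t x.
      by move=> x xv; rewrite (heq x xv).
    have sl : forall x, x != v -> step (star_edge v) (c t) x = c t lm - 1.
      by move=> x xv; rewrite step_leaf // heq // ltNge (ltW h) /= h.
    case: (ltP (step (star_edge v) (c t) lm) (step (star_edge v) (c t) v)) => h2.
      exists t; split => //; apply: pp_star => x xv; left; split.
        exact: allgt.
      by rewrite (sl x xv) -(sl lm hlm).
    have hv := @step_v_ge _ v (c t) allgt.
    have [r [hr hp]] := IH t.+1 ltac:(by move=> x xv; rewrite !cS !sl)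
      ltac:(rewrite !cS; have := sl lm hlm; lia).
    by exists r; split => //; exact: ltnW.
  - have alllt : forall x, x != v -> c t x < c t v.
      by move=> x xv; rewrite (heq x xv).
    have sl : forall x, x != v -> step (star_edge v) (c t) x = c t lm + 1.
      by move=> x xv; rewrite step_leaf // heq // h.
    case: (ltP (step (star_edge v) (c t) v) (step (star_edge v) (c t) lm)) => h2.
      exists t; split => //; apply: pp_star => x xv; right; left; split.
        exact: alllt.
      by rewrite (sl x xv) -(sl lm hlm).
    have hv := @step_v_le _ v (c t) alllt.
    have [r [hr hp]] := IH t.+1 ltac:(by move=> x xv; rewrite !cS !sl)
      ltac:(rewrite !cS; have := sl lm hlm; lia).
    by exists r; split => //; exact: ltnW.
  - by exists t; split => //; apply: eqcase => x xv; rewrite heq.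
move=> t hd.
have e : c t lM = c t lm by have := P1 t; rewrite hd; lia.
apply: (P5k `|c t lm - c t v|%N) => // x xv.
by have := inv t x xv; lia.
Qed.
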